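(* Let $-\beta\in(0,1)$, $c\in(0,1)$ and let $n\geq 2$ be an integer. Let $C_n=-\beta+\frac{(n+1)c}{1-c}$ and assume that $M_n(C_n;\beta,c)\neq 0$. Then the $n+1$ zeros of the polynomial $(x-C_n)M_n(x;\beta,c)$ interlace with the $n+1$ zeros of $M_{n+1}(x;\beta+1,c)$.
   Context: Monic Meixner polynomials are defined by $$M_n(x;\beta,c)=\left(\frac{c}{c-1}\right)^n(\beta)_n\sum_{k=0}^{n}\frac{(-n)_k(-x)_k(1-\frac1c)^k}{(\beta)_k\,k!},$$ for real $\beta,c$ with $c\neq 0$ and $\beta\notin\{-1,-2,\dots,-n+1\}$, where $(\alpha)_0=1$ and $(\alpha)_k=\alpha(\alpha+1)\cdots(\alpha+k-1)$ for $k\geq1$. For the parameters considered, the zeros of $M_n(x;\beta,c)$ and of $M_{n+1}(x;\beta+1,c)$ are real and distinct. Two sets of $m$ real numbers each ''interlace'' if, when all $2m$ numbers are listed in increasing order, they are distinct and elements of the two sets strictly alternate. *)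

(* Defs.v *)
From HB Require Import structures.
From mathcomp Require Import all_boot all_order all_algebra.
From mathcomp Require Import reals.
Set Implicit Arguments. Unset Strict Implicit. Unset Printing Implicit Defensive.
Import Order.TTheory GRing.Theory Num.Theory.
Local Open Scope ring_scope.

Definition poch {R : ringType} (a : R) (k : nat) : R :=
  \prod_(i < k) (a + i%:R).

Definition poch_negX {R : ringType} (k : nat) : {poly R} :=
  \prod_(i < k) (i%:R%:P - 'X).

(* Monic Meixner polynomial M_n(x; beta, c). *)
Definition meixner {R : fieldType} (n : nat) (beta c : R) : {poly R} :=
  ((c / (c - 1)) ^+ n * poch beta n) *:
    \sum_(k < n.+1)
      ((poch (- (n%:R)) k * (1 - c^-1) ^+ k / (poch beta k * (k`!)%:R))
         *: poch_negX k).

Definition alt {R : numDomainType} (s t : seq R) : Prop :=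
  forall i, (i < size s)%N ->
    s`_i < t`_i /\ ((i.+1 < size s)%N -> t`_i < s`_i.+1).

Definition interlace {R : numDomainType} (s t : seq R) : Prop :=
  size s = size t /\ (alt s t \/ alt t s).

(* Main.v *)
Require Import Defs.
From HB Require Import structures.
From mathcomp Require Import all_boot all_order all_algebra.
From mathcomp Require Import reals.
From mathcomp Require Import ring lra zify.
From mathcomp Require Import polyrcf.
Import Order.TTheory GRing.Theory Num.Theory.
Local Open Scope ring_scope.

Lemma natrS {R : pzSemiRingType} (n : nat) : (n.+1)%:R = n%:R + 1 :> R.
Proof. by rewrite natr1. Qed.

Definition ff {R : fieldType} (a : R) (j : nat) : R := \prod_(i < j) (a - i%:R).
Definition fX {R : fieldType} (j : nat) : {poly R} := \prod_(i < j) ('X - (i%:R)%:P).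

Lemma ff0 (R : fieldType) (a : R) : ff a 0 = 1.
Proof. by rewrite /ff big_ord0. Qed.

Lemma ffS (R : fieldType) (a : R) j : ff a j.+1 = ff a j * (a - j%:R).
Proof. by rewrite /ff big_ord_recr. Qed.

Lemma ffSl (R : fieldType) (a : R) j : ff a j.+1 = a * ff (a - 1) j.
Proof.
rewrite /ff big_ord_recl subr0; congr (_ * _); apply: eq_bigr => i _.
by rewrite /bump /= natrS; ring.
Qed.

Lemma ff_nat0 (R : fieldType) (n j : nat) : (n < j)%N -> ff (n%:R : R) j = 0.
Proof.
move=> lt; rewrite /ff (bigD1 (Ordinal lt)) //= subrr mul0r //.
Qed.

Lemma ff_split (R : fieldType) (a : R) k j : ff a (k + j) = ff a k * ff (a - k%:R) j.
Proof.
elim: j => [|j IH]; first by rewrite addn0 ff0 mulr1.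
by rewrite addnS !ffS IH natrD -mulrA; congr (_ * (_ * _)); ring.
Qed.

Lemma ff_fact (R : fieldType) m : ff (m%:R : R) m = (m`!)%:R.
Proof.
elim: m => [|m IH]; first by rewrite ff0.
by rewrite ffSl factS natrM -IH natrS addrK.
Qed.

Lemma ff_binom (R : fieldType) k j :
  ff ((k + j)%:R : R) k * (j`!)%:R = ff ((k + j)%:R : R) j * (k`!)%:R.
Proof.
have h1 := @ff_split R ((k + j)%:R) k j.
have h2 := @ff_split R ((k + j)%:R) j k.
have e1 : ((k + j)%:R - k%:R : R) = j%:R by rewrite natrD addrAC subrr add0r.
have e2 : ((k + j)%:R - j%:R : R) = k%:R by rewrite natrD addrK.
rewrite e1 !ff_fact in h1; rewrite e2 (addnC j k) !ff_fact in h2.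
by rewrite -h1 -h2.
Qed.

Lemma fXS (R : fieldType) j : fX j.+1 = fX j * ('X - (j%:R)%:P) :> {poly R}.
Proof. by rewrite /fX big_ord_recr. Qed.

Lemma X_fX (R : fieldType) j : 'X * fX j = fX j.+1 + (j%:R : R) *: fX j.
Proof. by rewrite fXS mulrBr -mul_polyC; ring. Qed.

Lemma fX_monic (R : fieldType) j : (fX j : {poly R}) \is monic.
Proof. exact: monic_prod_XsubC. Qed.

Lemma size_fX (R : fieldType) j : size (fX j : {poly R}) = j.+1.
Proof.
elim: j => [|j IH]; first by rewrite /fX big_ord0 size_poly1.
rewrite fXS size_Mmonic ?monicXsubC ?size_XsubC ?IH ?addn2 //.
by rewrite -size_poly_eq0 IH.
Qed.

Lemma poch_negX_fX (R : fieldType) k : poch_negX k = (-1) ^+ k *: (fX k : {poly R}).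
Proof.
rewrite /poch_negX /fX -mul_polyC.
have -> : \prod_(i < k) ((i%:R : R)%:P - 'X) = \prod_(i < k) - ('X - (i%:R)%:P).
  by apply: eq_bigr => i _; rewrite opprB.
by rewrite prodrN card_ord rmorphXn rmorphN rmorph1.
Qed.

Lemma poch_ff (R : fieldType) (n k : nat) : (-1) ^+ k * poch (- (n%:R) : R) k = ff n%:R k.
Proof.
rewrite /poch /ff.
have -> : \prod_(i < k) (- (n%:R : R) + i%:R) = \prod_(i < k) - (n%:R - i%:R).
  by apply: eq_bigr => i _; rewrite opprB addrC.
by rewrite prodrN card_ord mulrA -exprD -signr_odd oddD addbb expr0 mul1r.
Qed.

Lemma poch_split (R : fieldType) (a : R) k j :
  poch a (k + j) = poch a k * ff (a + (k + j)%:R - 1) j.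
Proof.
elim: j => [|j IH]; first by rewrite addn0 ff0 mulr1.
rewrite addnS /poch big_ord_recr /= -/(poch a (k + j)) IH ffSl -mulrA; congr (_ * _).
rewrite mulrC; congr (_ * _); last by congr ff; rewrite !natrD natrS; ring.
by rewrite natrS; ring.
Qed.

Definition T {R : fieldType} (d : nat -> R) (m : nat) : {poly R} :=
  \sum_(j < m.+1) d j *: fX (m - j).

Lemma T_ext (R : fieldType) (d e : nat -> R) m :
  (forall j, (j <= m)%N -> d j = e j) -> T d m = T e m.
Proof. by move=> h; apply: eq_bigr => j _; rewrite h // -ltnS. Qed.

Lemma T_add (R : fieldType) (d e : nat -> R) m :
  T d m + T e m = T (fun j => d j + e j) m.
Proof. by rewrite /T -big_split; apply: eq_bigr => j _; rewrite scalerDl. Qed.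

Lemma T_scale (R : fieldType) (a : R) (d : nat -> R) m :
  a *: T d m = T (fun j => a * d j) m.
Proof. by rewrite /T scaler_sumr; apply: eq_bigr => j _; rewrite scalerA. Qed.

Lemma T_shift (R : fieldType) (d : nat -> R) m :
  T d m = T (fun j => if j is j'.+1 then d j' else 0) m.+1.
Proof.
rewrite /T [RHS]big_ord_recl /= scale0r add0r; apply: eq_bigr => j _.
by rewrite /bump /= add1n subSS.
Qed.

Lemma T_X (R : fieldType) (d : nat -> R) m : d m.+1 = 0 ->
  'X * T d m = T (fun j => d j + (if j is j'.+1 then (m - j')%:R * d j' else 0)) m.+1.
Proof.
move=> hd; rewrite /T.
under [RHS]eq_bigr do rewrite scalerDl.
rewrite big_split /= mulr_sumr.
rewrite [X in _ = X + _]big_ord_recr /= hd scale0r addr0 [X in _ = _ + X]big_ord_recl /= scale0r add0r.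
rewrite -big_split /=; apply: eq_bigr => j _.
rewrite -scalerAr X_fX scalerDr scalerA /bump /= add1n subSS subSn; last by rewrite -ltnS.
by rewrite mulrC.
Qed.

Lemma T_monic (R : fieldType) (d : nat -> R) m : d 0%N = 1 ->
  T d m \is monic /\ size (T d m) = m.+1.
Proof.
move=> h0; rewrite /T big_ord_recl /= h0 scale1r subn0.
have hs : (size ((\sum_(i < m) d (bump 0 i) *: (fX (m - bump 0 i) : {poly R}))%R) <= m)%N.
  elim/big_ind: _ => [|p q hp hq|i _]; first by rewrite size_poly0.
    by apply: leq_trans (size_polyD _ _) _; rewrite geq_max hp hq.
  apply: leq_trans (size_scale_leq _ _) _; rewrite size_fX.
  by rewrite /bump /=; have := ltn_ord i; lia.
have hlt : (size ((\sum_(i < m) d (bump 0 i) *: (fX (m - bump 0 i) : {poly R}))%R) < size (fX m : {poly R}))%N.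
  by rewrite size_fX ltnS.
split; last by rewrite size_polyDl // size_fX.
by rewrite monicE lead_coefDl // (monicP (fX_monic _ _)).
Qed.

Definition cm {R : fieldType} (g c : R) (n j : nat) : R :=
  ff n%:R j * ff (g + n%:R - 1) j / ((j`!)%:R * (1 - c^-1) ^+ j).

Lemma poch_neq0 (R : fieldType) (g : R) k : (forall i : nat, g + i%:R != 0) -> poch g k != 0.
Proof. by move=> h; apply/prodf_neq0 => i _. Qed.

Lemma cm_coef (R : numFieldType) (g c : R) n k j : n = (k + j)%N ->
  (forall i : nat, g + i%:R != 0) -> c != 0 -> c != 1 ->
  (c / (c - 1)) ^+ n * poch g n *
    (poch (- n%:R) k * (1 - c^-1) ^+ k / (poch g k * (k`!)%:R)) * (-1) ^+ k
  = cm g c n j.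
Proof.
move=> -> hg hc hc1; rewrite /cm poch_split.
have e1 : poch (- (k + j)%:R) k = (-1) ^+ k * ff ((k + j)%:R : R) k.
  by rewrite -poch_ff mulrA -exprD addnn -signr_odd odd_double expr0 mul1r.
have e2 : ff ((k + j)%:R : R) k = ff ((k + j)%:R : R) j * (k`!)%:R / (j`!)%:R.
  by rewrite -ff_binom mulfK // pnatr_eq0 -lt0n fact_gt0.
have hu : 1 - c^-1 = (c - 1) / c by field.
have hc1' : c - 1 != 0 by rewrite subr_eq0.
have hp := @poch_neq0 _ _ k hg.
have hk : (k`!)%:R != 0 :> R by rewrite pnatr_eq0 -lt0n fact_gt0.
have hj : (j`!)%:R != 0 :> R by rewrite pnatr_eq0 -lt0n fact_gt0.
rewrite e1 e2 hu !exprMn !exprVn !exprD -signr_odd.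
have h1 : c ^+ k != 0 by rewrite expf_neq0.
have h2 : c ^+ j != 0 by rewrite expf_neq0.
have h3 : (c - 1) ^+ k != 0 by rewrite expf_neq0.
have h4 : (c - 1) ^+ j != 0 by rewrite expf_neq0.
by case: (odd k); rewrite ?expr1 ?expr0; field; rewrite ?hp ?hk ?hj ?h1 ?h2 ?h3 ?h4 ?mulf_neq0 ?invr_neq0.
Qed.

Lemma meixner_T (R : numFieldType) (g c : R) n :
  (forall i : nat, g + i%:R != 0) -> c != 0 -> c != 1 ->
  meixner n g c = T (cm g c n) n.
Proof.
move=> hg hc hc1; rewrite /meixner /T scaler_sumr (reindex_inj rev_ord_inj) /=.
apply: eq_bigr => j _; rewrite poch_negX_fX !scalerA /= subSS; congr (_ *: _).
rewrite -(@cm_coef R g c n (n - j) j) //; try by rewrite !mulrA.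
by rewrite subnK // -ltnS.
Qed.

Lemma T_sub (R : fieldType) (d e : nat -> R) m :
  T d m - T e m = T (fun j => d j - e j) m.
Proof. by rewrite /T -sumrB; apply: eq_bigr => j _; rewrite scalerBl. Qed.

Lemma T_shift2 (R : fieldType) (d : nat -> R) m :
  T d m = T (fun j => if j is j'.+2 then d j' else 0) m.+2.
Proof. by rewrite T_shift T_shift; apply: T_ext => -[|[|j]]. Qed.

Lemma ffL1 (R : fieldType) (a : R) j : ff (a + 1) j.+1 = (a + 1) * ff a j.
Proof. by rewrite ffSl addrK. Qed.

Definition bq {R : fieldType} (g c : R) (m : nat) : R := (m%:R + (m%:R + g) * c) / (1 - c).
Definition lq {R : fieldType} (g c : R) (m : nat) : R := m%:R * (m%:R + g - 1) * c / (1 - c) ^+ 2.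

Lemma fact_neq0 (R : numFieldType) j : (j`!)%:R != 0 :> R.
Proof. by rewrite pnatr_eq0 -lt0n fact_gt0. Qed.

Lemma T_rec (R : numFieldType) (g c : R) m : c != 0 -> c != 1 ->
  T (cm g c m.+2) m.+2 = 'X * T (cm g c m.+1) m.+1
     - bq g c m.+1 *: T (cm g c m.+1) m.+1 - lq g c m.+1 *: T (cm g c m) m.
Proof.
move=> hc hc1.
rewrite T_X; last by rewrite /cm ff_nat0 // !mul0r.
rewrite [T (cm g c m.+1) m.+1]T_shift [T (cm g c m) m]T_shift2 !T_scale !T_sub.
apply: T_ext => j hj.
have hu : 1 - c^-1 != 0 by rewrite subr_eq0 eq_sym invr_eq1.
have h1c : 1 - c != 0 by rewrite subr_eq0 eq_sym.
have eN1 : (m.+1%:R : R) = m%:R + 1 by rewrite natrS.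
have eN2 : (m.+2%:R : R) = m%:R + 1 + 1 by rewrite !natrS.
have eG1 : g + (m.+1%:R : R) - 1 = (g + m%:R - 1) + 1 by rewrite natrS; ring.
have eG2 : g + (m.+2%:R : R) - 1 = (g + m%:R - 1) + 1 + 1 by rewrite !natrS; ring.
rewrite /cm /bq /lq.
case: j hj => [|[|j]] hj /=.
- by rewrite !ff0 !mulr0 !subr0 addr0.
- have f0 : (0`!)%:R = 1 :> R by [].
  have f1 : (1`!)%:R = 1 :> R by [].
  rewrite !ffS !ff0 !mul1r !mulr0 !subr0 subn0 ?f0 ?f1.
  rewrite !natrS expr1; field.
  by rewrite h1c hc subr_eq0 hc1.
- rewrite (@ffS _ (m.+1%:R) j.+1) (@ffS _ (g + m.+1%:R - 1) j.+1).
  rewrite eG1 eG2 eN1 eN2 !ffL1 !factS !natrM subSS natrB; last by rewrite -ltnS -ltnS.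
  rewrite !exprS !natrS.
  have hj' := fact_neq0 R j.
  field.
  by rewrite expf_neq0 // hj' h1c hc subr_eq0 hc1 !natr1 !pnatr_eq0.
Qed.

Definition Cq {R : fieldType} (g c : R) (n : nat) : R := (1 - g + (g + n%:R) * c) / (1 - c).

Lemma T_id (R : numFieldType) (g c : R) n : c != 0 -> c != 1 ->
  ('X - (Cq g c n)%:P) * T (cm g c n) n - T (cm g c n.+1) n.+1
  = ((g + n%:R - 1) / (1 - c)) *: T (cm (g - 1) c n) n.
Proof.
move=> hc hc1.
rewrite mulrBl mul_polyC T_X; last by rewrite /cm ff_nat0 // !mul0r.
rewrite [T (cm g c n) n]T_shift [T (cm (g - 1) c n) n]T_shift !T_scale !T_sub.
apply: T_ext => j hj.
have hu : 1 - c^-1 != 0 by rewrite subr_eq0 eq_sym invr_eq1.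
have h1c : 1 - c != 0 by rewrite subr_eq0 eq_sym.
have hc1' : c - 1 != 0 by rewrite subr_eq0.
have eN1 : (n.+1%:R : R) = n%:R + 1 by rewrite natrS.
have eG1 : g + (n.+1%:R : R) - 1 = (g + n%:R - 1) + 1 by rewrite natrS; ring.
have eB : g - 1 + (n%:R : R) - 1 = (g + n%:R - 1) - 1 by ring.
rewrite /cm /Cq.
case: j hj => [|[|j]] hj /=.
- by rewrite !ff0 !mulr0 !subr0 addr0 subrr.
- have f0 : (0`!)%:R = 1 :> R by [].
  have f1 : (1`!)%:R = 1 :> R by [].
  rewrite !ffS !ff0 !mul1r ?mulr0 ?subr0 ?subn0 ?f0 ?f1.
  rewrite !natrS expr1; field.
  by rewrite h1c hc hc1'.
- rewrite eG1 eN1 eB.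
  set q0 := g + n%:R - 1.
  rewrite !ffL1 (@ffS _ n%:R j.+1) (@ffSl _ q0 j.+1) !(@ffSl _ q0 j) !(@ffS _ (q0 - 1) j).
  rewrite !factS !natrM natrB; last by rewrite -ltnS.
  rewrite !exprS !natrS.
  have hj' := fact_neq0 R j.
  rewrite /q0; field.
  by rewrite hc expf_neq0 // hc1' hj' h1c !natr1 !pnatr_eq0.
Qed.


Lemma sign_prod (R : realDomainType) (t : seq R) x : x \notin t ->
  0 < (-1) ^+ (count (fun y => x < y) t) * \prod_(y <- t) (x - y).
Proof.
elim: t => [|y t IH]; first by rewrite big_nil mulr1 expr0.
rewrite in_cons negb_or => /andP[hxy /IH {}IH].
rewrite big_cons /=.
case: (ltgtP x y) hxy => // h _.
- rewrite add1n exprS.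
  move: IH; set A := (-1) ^+ _; set P := \prod_(_ <- t) _ => IH.
  nra.
- rewrite /= add0n.
  move: IH; set A := (-1) ^+ _; set P := \prod_(_ <- t) _ => IH.
  nra.
Qed.

Lemma count_interl (R : realDomainType) (t : seq R) x j : sorted <%R t ->
  (j <= size t)%N -> ((0 < j)%N -> t`_j.-1 < x) -> ((j < size t)%N -> x < t`_j) ->
  count (fun y => x < y) t = (size t - j)%N.
Proof.
elim: t j => [|y t IH] j //= hs hj h1 h2.
case: j hj h1 h2 => [|j] hj h1 h2.
- have hxy : x < y by apply: h2.
  rewrite hxy add1n subn0; congr S.
  have hall : all (fun z => y < z) t := order_path_min lt_trans hs.
  apply/eqP; rewrite -all_count; apply/allP => z hz.
  by apply: lt_trans hxy _; move/allP: hall; apply.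
- have hyx : y <= x.
    case: j hj h1 h2 => [|j] hj h1 h2; first by apply/ltW/h1.
    have := h1 erefl => /= htx.
    apply: ltW; apply: le_lt_trans htx.
    have hs' : sorted <%R (y :: t) by [].
    have := sorted_ltn_nth lt_trans 0 hs' 0%N j.+1.
    move=> /(_ isT hj isT) /ltW.
    done.
  rewrite ltNge hyx add0n subSS (IH j) //; first exact: path_sorted hs.
  by case: j {hj h2 IH} h1 => // j h1 _; apply: h1.
Qed.

Lemma chain (R : rcfType) (p : {poly R}) (u : seq R) : sorted <%R u ->
  (forall i, (i.+1 < size u)%N -> p.[u`_i] * p.[u`_i.+1] < 0) ->
  exists r : seq R, size r = (size u).-1 /\
    (forall i, (i < size r)%N -> (u`_i < r`_i < u`_i.+1) && root p r`_i).
Proof.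
elim: u => [|x u IH] hs hsg; first by exists [::].
case: u IH hs hsg => [|y u] IH hs hsg; first by exists [::].
have [r [hr1 hr2]] := IH (path_sorted hs) (fun i hi => hsg i.+1 hi).
have hxy : x < y by case/andP: hs.
have [z hz hrz] := poly_ivtoo (ltW hxy) (hsg 0%N isT).
exists (z :: r); split; first by rewrite /= hr1.
case=> [|i] hi /=; first by rewrite hrz andbT; rewrite in_itv /= in hz.
exact: hr2.
Qed.

Lemma ends (R : realFieldType) (p : {poly R}) z : 0 < lead_coef p ->
  (exists b, z < b /\ 0 < p.[b]) /\
  (exists a, a < z /\ 0 < (-1) ^+ (size p).-1 * p.[a]).
Proof.
move=> hl; split.
  have [n0 hn0] := poly_pinfty_gt_lc hl.
  exists (Num.max n0 (z + 1)); split.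
    by rewrite lt_max; apply/orP; right; rewrite ltrDl.
  by apply: lt_le_trans hl (hn0 _ _); rewrite le_max lexx.
set q := (-1) ^+ (size p).-1 *: (p \Po - 'X).
have hlq : lead_coef q = lead_coef p.
  rewrite lead_coefZ lead_coef_comp ?size_polyN ?size_polyX //.
  rewrite lead_coefN lead_coefX mulrCA -exprMn mulrNN mulr1 expr1n mulr1 //.
have hl' : 0 < lead_coef q by rewrite hlq.
have [n1 hn1] := poly_pinfty_gt_lc hl'.
set x := Num.max n1 (- z + 1).
exists (- x); split.
  rewrite ltrNl lt_max; apply/orP; right; rewrite ltrDl //.
have := hn1 x; rewrite le_max lexx => /(_ isT).
rewrite /q hornerZ horner_comp hornerN hornerX => h.
exact: lt_le_trans hl' h.
Qed.

Lemma roots_between (R : rcfType) (p : {poly R}) (u : seq R) : p != 0 ->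
  (size p <= size u)%N -> sorted <%R u ->
  (forall i, (i.+1 < size u)%N -> p.[u`_i] * p.[u`_i.+1] < 0) ->
  exists r : seq R, [/\ size r = (size u).-1,
    (forall i, (i < size r)%N -> u`_i < r`_i < u`_i.+1),
    (forall x, root p x = (x \in r)) & sorted <%R r].
Proof.
move=> hp hsz hs hsg.
have [r [hr1 hr2]] := @chain _ p u hs hsg.
have hsr : sorted <%R r.
  apply/(sortedP 0) => i hi.
  have /andP[/andP[_ h1] _] := hr2 i (ltnW hi).
  have /andP[/andP[h2 _] _] := hr2 i.+1 hi.
  exact: lt_trans h1 h2.
have hall : all (root p) r.
  by apply/(all_nthP 0) => i hi; have /andP[_ ->] := hr2 i hi.
exists r; split => //.
- by move=> i hi; have /andP[-> _] := hr2 i hi.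
move=> x; apply/idP/idP; last by move=> hx; move/allP: hall; apply.
move=> hx; apply/negPn/negP => hxr.
have := max_poly_roots hp (_ : all (root p) (x :: r)).
rewrite /= hxr (sorted_uniq lt_trans ltxx hsr) hx hall => /(_ isT isT).
rewrite hr1 => h.
move: hsz h; case: (size u) => [|k] /=; last by move=> h1 h2; have := leq_trans h2 h1; rewrite ltnn.
by rewrite leqn0 size_poly_eq0 (negPf hp).
Qed.

Lemma alt_sign (R : realDomainType) (x y : R) K i : (i < K)%N ->
  0 < (-1) ^+ (K - i) * x -> 0 < (-1) ^+ (K - i.+1) * y -> x * y < 0.
Proof.
move=> hi; rewrite -(subnSK hi) exprS.
set s := (-1) ^+ (K - i.+1).
have hs : s * s = 1 by rewrite /s -expr2 sqrr_sign.
nra.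
Qed.

Lemma core (R : rcfType) (p : {poly R}) (u : seq R) : p != 0 ->
  (size p <= size u)%N -> sorted <%R u ->
  (forall i, (i < size u)%N -> 0 < (-1) ^+ ((size u).-1 - i) * p.[u`_i]) ->
  exists r : seq R, [/\ size r = (size u).-1,
    (forall i, (i < size r)%N -> u`_i < r`_i < u`_i.+1),
    (forall x, root p x = (x \in r)) & sorted <%R r].
Proof.
move=> hp hsz hs hsg; apply: roots_between => // i hi.
apply: (@alt_sign _ _ _ (size u).-1 i); last exact: hsg.
- by rewrite -ltnS prednK // (leq_ltn_trans _ hi).
- by apply: hsg; apply: ltnW.
Qed.

Lemma sorted_cons_lt (R : realDomainType) (a : R) (t : seq R) :
  sorted <%R t -> ((0 < size t)%N -> a < t`_0) -> sorted <%R (a :: t).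
Proof. by case: t => [|y t] //= hs /(_ isT) ->. Qed.

Lemma G1 (R : rcfType) (p : {poly R}) (t : seq R) N : p \is monic ->
  size p = N.+2 -> size t = N.+1 -> sorted <%R t ->
  (forall i, (i < N.+1)%N -> 0 < (-1) ^+ (N - i) * p.[t`_i]) ->
  exists s : seq R, [/\ size s = N.+1,
    (forall i, (i < N.+1)%N -> s`_i < t`_i /\ ((i.+1 < N.+1)%N -> t`_i < s`_i.+1)),
    (forall x, root p x = (x \in s)) & sorted <%R s].
Proof.
move=> hm hsp hst hs hsg.
have hl : 0 < lead_coef p by rewrite (monicP hm) ltr01.
have [_ [a [ha1 ha2]]] := @ends _ p (t`_0) hl.
have hp : p != 0 by rewrite -size_poly_eq0 hsp.
have h1 : (size p <= size (a :: t))%N by rewrite /= hst hsp.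
have h2 : sorted <%R (a :: t) by apply: sorted_cons_lt.
have h3 : forall i, (i < size (a :: t))%N ->
    0 < (-1) ^+ ((size (a :: t)).-1 - i) * p.[(a :: t)`_i].
  case=> [|i] hi /=; first by rewrite hst subn0; rewrite hsp in ha2.
  by rewrite hst subSS; apply: hsg; rewrite -hst.
have [r [hr1 hr2 hr3 hr4]] := @core _ p (a :: t) hp h1 h2 h3.
exists r; split => //; first by rewrite hr1 /= hst.
move=> i hi; have := hr2 i; rewrite hr1 /= hst => /(_ hi) /andP[_ ->]; split => //.
by move=> hi1; have := hr2 i.+1; rewrite hr1 /= hst => /(_ hi1) /andP[-> _].
Qed.

Lemma G0 (R : rcfType) (p : {poly R}) (t : seq R) N : p \is monic ->
  size p = N.+2 -> size t = N -> sorted <%R t ->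
  (forall i, (i < N)%N -> 0 < (-1) ^+ (N - i) * p.[t`_i]) ->
  exists s : seq R, [/\ size s = N.+1,
    (forall i, (i < N)%N -> s`_i < t`_i < s`_i.+1),
    (forall x, root p x = (x \in s)) & sorted <%R s].
Proof.
move=> hm hsp hst hs hsg.
have hl : 0 < lead_coef p by rewrite (monicP hm) ltr01.
have [_ [a [ha1 ha2]]] := @ends _ p (t`_0) hl.
have [[b [hb1 hb2]] _] := @ends _ p (last a t) hl.
have hp : p != 0 by rewrite -size_poly_eq0 hsp.
set u := a :: rcons t b.
have hsu : size u = N.+2 by rewrite /u /= size_rcons hst.
have h1 : (size p <= size u)%N by rewrite hsu hsp.
have h2 : sorted <%R u.
  rewrite /u /= rcons_path hb1 andbT.
  by case: t hs ha1 {hst hsg hb1 hb2 u hsu h1} => //= y t -> ->.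
have h3 : forall i, (i < size u)%N ->
    0 < (-1) ^+ ((size u).-1 - i) * p.[u`_i].
  rewrite hsu /=; case=> [|i] hi /=; first by rewrite subn0; rewrite hsp in ha2.
  rewrite subSS nth_rcons hst.
  case: ltnP => hiN; first by apply: hsg.
  have -> : i = N by apply/eqP; rewrite eqn_leq hiN andbT; exact: hi.
  by rewrite eqxx subnn expr0 mul1r.
have [r [hr1 hr2 hr3 hr4]] := @core _ p u hp h1 h2 h3.
exists r; split => //; first by rewrite hr1 hsu.
move=> i hi.
have e : u`_i.+1 = t`_i by rewrite /u /= nth_rcons hst hi.
have := hr2 i; rewrite hr1 hsu => /(_ (ltnW hi)) /andP[_]; rewrite e => ->.
by have := hr2 i.+1; rewrite hr1 hsu => /(_ hi) /andP[]; rewrite e => ->.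
Qed.


Definition Inv {R : rcfType} (p0 p1 : {poly R}) (k : nat) : Prop :=
  exists t : seq R, [/\ size t = k.+1, sorted <%R t, (forall x, root p1 x = (x \in t))
     & forall i, (i < k.+1)%N -> 0 < (-1) ^+ (k - i) * p0.[t`_i]].

Lemma step (R : rcfType) (p0 p1 p2 : {poly R}) k b l :
  p1 \is monic -> size p1 = k.+2 -> p2 \is monic -> size p2 = k.+3 ->
  p2 = ('X - b%:P) * p1 - l *: p0 -> 0 < l ->
  Inv p0 p1 k -> Inv p1 p2 k.+1.
Proof.
move=> hm1 hs1 hm2 hs2 hrec hl [t [ht1 ht2 ht3 ht4]].
have ev : forall x, root p1 x -> p2.[x] = - l * p0.[x].
  move=> x /eqP hx; rewrite hrec hornerD hornerN hornerM hx mulr0 add0r hornerZ.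
  by rewrite mulNr.
have hsg : forall i, (i < k.+1)%N -> 0 < (-1) ^+ (k.+1 - i) * p2.[t`_i].
  move=> i hi; rewrite ev; last by rewrite ht3 mem_nth // ht1.
  rewrite subSn // exprS.
  have := ht4 i hi; nra.
have [s [hs1' hs2' hs3' hs4']] := @G0 _ p2 t k.+1 hm2 hs2 ht1 ht2 hsg.
exists s; split => //.
move=> i hi.
have hp1 : p1 = \prod_(y <- t) ('X - y%:P).
  rewrite {1}(@all_roots_prod_XsubC _ p1 t) ?(monicP hm1) ?scale1r //.
  - by rewrite hs1 ht1.
  - by apply/allP => x; rewrite ht3.
  - by rewrite uniq_rootsE (sorted_uniq lt_trans ltxx ht2).
have hnot : s`_i \notin t.
  apply/negP => hin.
  have hr2 : root p2 s`_i by rewrite hs3' mem_nth // hs1'.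
  have hr1 : root p1 s`_i by rewrite ht3.
  move/(nthP 0): hin => [j hj hje].
  have := ht4 j; rewrite -ht1 => /(_ hj); rewrite hje.
  move: hr2; rewrite /root ev // => /eqP h.
  have h0 : p0.[s`_i] = 0.
    by apply/eqP; move/eqP: h; rewrite mulNr oppr_eq0 mulf_eq0 gt_eqF.
  by rewrite h0 mulr0 ltxx.
have hc := @count_interl _ t s`_i i ht2.
rewrite ht1 in hc.
have hcnt : count (fun y => s`_i < y) t = (k.+1 - i)%N.
  apply: hc.
  - by rewrite -ltnS.
  - case: i hi {hnot} => // i hi _ /=.
    by have /andP[_ ->] := hs2' i hi.
  - by move=> hik; have /andP[-> _] := hs2' i hik.
rewrite -hcnt hp1 horner_prod.
have -> : \prod_(y <- t) ('X - y%:P).[s`_i] = \prod_(y <- t) (s`_i - y).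
  by apply: eq_bigr => y _; rewrite hornerXsubC.
exact: sign_prod.
Qed.

Lemma cm0 (R : fieldType) (g c : R) n : cm g c n 0 = 1.
Proof. by rewrite /cm !ff0 expr0 mulr1 mul1r invr1. Qed.

Lemma M_monic (R : numFieldType) (g c : R) n :
  (forall i : nat, g + i%:R != 0) -> c != 0 -> c != 1 ->
  meixner n g c \is monic /\ size (meixner n g c) = n.+1.
Proof. by move=> *; rewrite meixner_T //; apply: T_monic; rewrite cm0. Qed.

Lemma M0 (R : numFieldType) (g c : R) :
  (forall i : nat, g + i%:R != 0) -> c != 0 -> c != 1 -> meixner 0 g c = 1.
Proof.
by move=> *; rewrite meixner_T // /T big_ord1 cm0 /fX big_ord0 scale1r.
Qed.

Lemma inv_all (R : rcfType) (g c : R) : 0 < g -> 0 < c < 1 ->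
  forall k, Inv (meixner k g c) (meixner k.+1 g c) k.
Proof.
move=> hg /andP[hc0 hc1] k.
have hgi : forall i : nat, g + i%:R != 0.
  by move=> i; rewrite gt_eqF // ltr_wpDr.
have hc : c != 0 by rewrite gt_eqF.
have hc1' : c != 1 by rewrite lt_eqF.
elim: k => [|k IH].
  have [hm hs] := @M_monic _ g c 1 hgi hc hc1'.
  have [s [hs1 _ hs3 hs4]] := @G0 _ (meixner 1 g c) [::] 0 hm hs erefl isT (fun i (hi : (i < 0)%N) => False_ind _ (notF hi)).
  exists s; split => //.
  by move=> i _; rewrite M0 // hornerC expr0 mul1r ltr01.
have [hm1 hs1] := @M_monic _ g c k.+1 hgi hc hc1'.
have [hm2 hs2] := @M_monic _ g c k.+2 hgi hc hc1'.
apply: (@step _ _ _ _ k (bq g c k.+1) (lq g c k.+1) hm1 hs1 hm2 hs2 _ _ IH).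
  rewrite !meixner_T // T_rec // mulrBl mul_polyC.
  done.
rewrite /lq; apply: divr_gt0; last by apply: exprn_gt0; rewrite subr_gt0.
apply: mulr_gt0 => //; apply: mulr_gt0; first by rewrite ltr0Sn.
by rewrite natrS; have := ler0n R k; lra.
Qed.

Theorem theorem3p6 (R : realType) (beta c : R) (n : nat) :
  0 < - beta < 1 -> 0 < c < 1 -> (2 <= n)%N ->
  (meixner n beta c).[- beta + n.+1%:R * c / (1 - c)] != 0 ->
  exists s t : seq R,
    [/\ size s = n.+1, size t = n.+1,
        (forall x, root (('X - (- beta + n.+1%:R * c / (1 - c))%:P)
                          * meixner n beta c) x = (x \in s)),
        (forall x, root (meixner n.+1 (beta + 1) c) x = (x \in t))
      & interlace s t].
Proof.
move=> /andP[hb0 hb1] hcc hn hM.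
have /andP[hc0 hc1] := hcc.
set C := - beta + n.+1%:R * c / (1 - c).
have hg : 0 < beta + 1 by lra.
have hc : c != 0 by rewrite gt_eqF.
have hc1' : c != 1 by rewrite lt_eqF.
have h1c : 1 - c != 0 by rewrite subr_eq0 eq_sym.
have hgi : forall i : nat, beta + 1 + i%:R != 0.
  by move=> i; rewrite gt_eqF // ltr_wpDr.
have hbi : forall i : nat, beta + i%:R != 0.
  case=> [|i]; first by rewrite addr0 lt_eqF //; lra.
  by rewrite gt_eqF // natrS addrA; have := ler0n R i; lra.
have [t [ht1 ht2 ht3 ht4]] := @inv_all R (beta + 1) c hg hcc n.
have hid := @T_id R (beta + 1) c n hc hc1'.
rewrite -(@meixner_T _ (beta + 1) c n) // -(@meixner_T _ (beta + 1) c n.+1) // in hid.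
rewrite addrK -(@meixner_T _ beta c n) // in hid.
have eC : Cq (beta + 1) c n = C by rewrite /Cq /C; field.
rewrite eC in hid.
set k := (beta + 1 + n%:R - 1) / (1 - c) in hid.
have hk : 0 < k.
  rewrite /k; apply: divr_gt0; last by rewrite subr_gt0.
  have : (1 <= n%:R :> R) by rewrite ler1n; apply: leq_trans hn.
  lra.
set P := ('X - C%:P) * meixner n beta c.
have [hmb hsb] := @M_monic _ beta c n hbi hc hc1'.
have hmP : P \is monic by rewrite /P monicMl ?monicXsubC.
have hsP : size P = n.+2.
  by rewrite /P size_Mmonic ?hsb ?size_XsubC // -size_poly_eq0 size_XsubC.
have hsg : forall i, (i < n.+1)%N -> 0 < (-1) ^+ (n - i) * P.[t`_i].
  move=> i hi.
  have hr : root (meixner n.+1 (beta + 1) c) t`_i by rewrite ht3 mem_nth // ht1.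
  have ev := congr1 (fun p => p.[t`_i]) hid; move: ev => /=.
  rewrite hornerD hornerN hornerM (eqP hr) subr0 hornerXsubC [(k *: _).[_]]hornerZ => ev.
  have hd : t`_i - C != 0.
    apply: contra hM => /eqP hd.
    have e : C = t`_i by apply/eqP; rewrite eq_sym -subr_eq0 hd.
    rewrite /C in e; rewrite e; move: ev; rewrite hd mul0r => /eqP; rewrite eq_sym mulf_eq0 gt_eqF //=.
  have := ht4 i hi.
  rewrite /P hornerM hornerXsubC.
  move: ev hd; set d := t`_i - C; set m := (meixner n (beta + 1) c).[t`_i].
  set q := (meixner n beta c).[t`_i]; set sg := (-1) ^+ (n - i) => ev hd hm.
  have hd2 : 0 < d * d by case: (ltgtP d 0) hd => // h _; nra.
  have -> : q = d * m / k by rewrite ev mulrC mulKf // gt_eqF.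
  have -> : sg * (d * (d * m / k)) = (d * d) * (sg * m) / k by field; rewrite gt_eqF.
  by apply: divr_gt0 => //; apply: mulr_gt0.
have [s [hs1 hs2 hs3 hs4]] := @G1 _ P t n hmP hsP ht1 ht2 hsg.
exists s, t; split => //.
split; first by rewrite hs1 ht1.
left => i hi; rewrite hs1 in hi; have [h1 h2] := hs2 i hi; split => // hi1.
by apply: h2; rewrite -hs1.
Qed.
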